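(* Let $e\in K\setminus\{0\}$ and $f=\|\cdot\|e:X\to Y$. Then $D_{X^*}e\subset\widehat\partial f(0)$, where $D_{X^*}e=\{x^*(\cdot)e: x^*\in D_{X^*}\}$, and for every $y^*\in K_e^+$, $$y^*(\widehat\partial f(0))\subset y^*(e)D_{X^*}.$$
   Context: $X,Y$ are real normed spaces with duals $X^*,Y^*$; $D_{X^*}$ is the closed unit ball of $X^*$; $B(X,Y)$ is the space of bounded linear operators $X\to Y$; $B(x,\delta)$ is the open ball and $D_Y$ the closed unit ball of $Y$. $K\subset Y$ is a pointed closed convex cone, $K^+=\{y^*\in Y^*: y^*(k)\ge0\ \forall k\in K\}$, and $K_e^+=\{y^*\in K^+: y^*(e)\neq0\}$. For $f:X\to Y$, $\widehat\partial f(\bar x)$ is the set of all $T\in B(X,Y)$ such that for every $\varepsilon>0$ there is $\delta>0$ with $f(x)+K\subset f(\bar x)+K+T(x-\bar x)+\varepsilon\|x-\bar x\|D_Y$ for all $x\in B(\bar x,\delta)$. For $\mathcal T\subset B(X,Y)$, $y^*(\mathcal T)=\{y^*\circ T:T\in\mathcal T\}\subset X^*$. *)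

(* Defs.v *)
From HB Require Import structures.
From mathcomp Require Import all_boot all_order all_algebra.
From mathcomp Require Import all_classical all_reals all_analysis.
Set Implicit Arguments. Unset Strict Implicit. Unset Printing Implicit Defensive.
Import Order.TTheory GRing.Theory Num.Theory.
Import numFieldNormedType.Exports.
Local Open Scope classical_set_scope.
Local Open Scope ring_scope.

Definition bounded_linear {R : realType} {U V : normedModType R} (T : U -> V) : Prop :=
  (forall (a : R) (x y : U), T (a *: x + y) = a *: T x + T y) /\
  (exists M : R, forall x : U, `|T x| <= M * `|x|).

Definition dual {R : realType} {U : normedModType R} (xs : U -> R) : Prop :=
  @bounded_linear R U R^o xs.

Definition dual_ball {R : realType} {U : normedModType R} (xs : U -> R) : Prop :=
  dual xs /\ forall x : U, `|xs x| <= `|x|.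

Definition pointed_closed_convex_cone {R : realType} {V : normedModType R}
  (K : set V) : Prop :=
  closed K /\ K 0 /\
  (forall k1 k2, K k1 -> K k2 -> K (k1 + k2)) /\
  (forall (t : R) k, 0 <= t -> K k -> K (t *: k)) /\
  (forall k, K k -> K (- k) -> k = 0).

Definition dual_cone {R : realType} {V : normedModType R} (K : set V) (ys : V -> R) : Prop :=
  dual ys /\ forall k, K k -> 0 <= ys k.

Definition dual_cone_e {R : realType} {V : normedModType R} (K : set V) (e : V)
  (ys : V -> R) : Prop :=
  dual_cone K ys /\ ys e <> 0.

(* Frechet-type subdifferential \hat\partial f(xbar) w.r.t. the cone K:
   T in B(X,Y) such that for every eps > 0 there is delta > 0 with
   f(x) + K \subset f(xbar) + K + T(x - xbar) + eps ||x - xbar|| D_Y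
   for all x in the open ball B(xbar, delta). *)
Definition frechet_subdiff {R : realType} {U V : normedModType R}
  (K : set V) (f : U -> V) (xbar : U) (T : U -> V) : Prop :=
  bounded_linear T /\
  forall eps : R, 0 < eps -> exists2 delta : R, 0 < delta &
    forall x : U, `|x - xbar| < delta ->
      forall k : V, K k ->
        exists k' : V, exists d : V,
          [/\ K k', `|d| <= 1 &
              f x + k = f xbar + k' + T (x - xbar) + (eps * `|x - xbar|) *: d].

(* Main.v *)
Require Import Defs.
From HB Require Import structures.
From mathcomp Require Import all_boot all_order all_algebra.
From mathcomp Require Import all_classical all_reals all_analysis.
From mathcomp Require Import ring lra.
Import Order.TTheory GRing.Theory Num.Theory.
Import numFieldNormedType.Exports.
Local Open Scope classical_set_scope.
Local Open Scope ring_scope.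

Lemma bl0 (R : realType) (U V : normedModType R) (T : U -> V) :
  bounded_linear T -> T 0 = 0.
Proof.
move=> [HT _]; have := HT 1 0 0.
rewrite !scale1r addr0 => E; apply: (addrI (T 0)); by rewrite addr0 -E.
Qed.

Lemma blZ (R : realType) (U V : normedModType R) (T : U -> V) a x :
  bounded_linear T -> T (a *: x) = a *: T x.
Proof.
move=> H; have := H.1 a x 0; by rewrite addr0 (@bl0 _ _ _ T H) addr0.
Qed.

Lemma blD (R : realType) (U V : normedModType R) (T : U -> V) x y :
  bounded_linear T -> T (x + y) = T x + T y.
Proof. by move=> H; have := H.1 1 x y; rewrite !scale1r. Qed.

Lemma le_eps (R : realType) (a b c : R) :
  0 <= c -> (forall eps : R, 0 < eps -> a <= b + eps * c) -> a <= b.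
Proof.
move=> c0 H; rewrite leNgt; apply/negP => ab.
have p : 0 < (a - b) / (c + 1) by apply: divr_gt0; lra.
have := H _ p.
have -> : (a - b) / (c + 1) * c = (a - b) - (a - b) / (c + 1).
  by field; lra.
lra.
Qed.
Theorem mainTheorem12 (R : realType) (X Y : normedModType R) (K : set Y) (e : Y) :
  pointed_closed_convex_cone K -> K e -> e <> 0 ->
  (forall xs : X -> R, dual_ball xs ->
     frechet_subdiff K (fun x : X => `|x| *: e) 0 (fun x : X => xs x *: e)) /\
  (forall ys : Y -> R, dual_cone_e K e ys ->
     forall T : X -> Y, frechet_subdiff K (fun x : X => `|x| *: e) 0 T ->
       exists2 xs : X -> R, dual_ball xs & forall x : X, ys (T x) = ys e * xs x).
Proof.
move=> [Kc [K0 [KD [KZ Kp]]]] Ke e0; split.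
- move=> xs [[xl [M HM]] xb]; split.
  + split.
      move=> a x y; rewrite xl scalerDl scalerA //.
    exists `|e| => x; rewrite normrZ mulrC; apply: ler_wpM2l => //; exact: xb.
  + move=> eps eps0; exists 1 => // x _ k Kk.
    exists ((`|x| - xs x) *: e + k), 0; split => //.
      apply: KD => //; apply: KZ => //.
      by rewrite subr_ge0; exact: le_trans (ler_norm _) (xb x).
      by rewrite normr0.
    rewrite !subr0 normr0 scale0r scaler0 addr0 scalerBl add0r.
    by rewrite addrAC subrK.
- move=> ys [[ysL ysK] yse0] T [TL HT].
  have ye : 0 < ys e by rewrite lt_def; apply/andP; split; [apply/eqP | apply: ysK].
  have [ysl [My HMy]] := ysL.
  have key : forall eps, 0 < eps -> forall z,
      ys (T z) <= `|z| * ys e + eps * (`|z| * `|My|).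
    move=> eps ep; have [d d0 Hd] := HT eps ep.
    have small : forall z, `|z| < d ->
        ys (T z) <= `|z| * ys e + eps * (`|z| * `|My|).
      move=> z zd; have [k' [dd [Kk' ndd Eq]]] := Hd z ltac:(by rewrite subr0) 0 K0.
      rewrite subr0 normr0 scale0r add0r addr0 in Eq.
      have E' := congr1 ys Eq.
      rewrite !(@blD _ _ _ _ _ _ ysL) !(@blZ _ _ _ _ _ _ ysL) in E'.
      have E2 : `|z| * ys e = ys k' + ys (T z) + eps * `|z| * ys dd by exact: E'.
      have k0 := ysK _ Kk'.
      have b1 : `|ys dd| <= `|My|.
        apply: le_trans (HMy dd) _.
        apply: le_trans (ler_norm _) _ => /=.
        rewrite normrM normr_id -[X in _ <= X]mulr1; apply: ler_wpM2l => //.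
      have b2 : - `|My| <= ys dd by move: b1; rewrite ler_norml => /andP[].
      have ez : 0 <= eps * `|z| by apply: mulr_ge0 => //; apply: ltW.
      nra.
    move=> z; have [->|zn] := eqVneq z 0.
      by rewrite (@bl0 _ _ _ _ TL) (@bl0 _ _ _ _ ysL) normr0 !mul0r mulr0 addr0.
    have zp : 0 < `|z| by rewrite normr_gt0.
    have [t tp tz] : exists2 t, 0 < t & t * `|z| = d / 2.
      exists (d / (2 * `|z|)); first by rewrite divr_gt0 // mulr_gt0.
      by field; rewrite gt_eqF.
    have := small (t *: z).
    rewrite normrZ (gtr0_norm tp) (@blZ _ _ _ _ _ _ TL) (@blZ _ _ _ _ _ _ ysL).
    move=> /(_ ltac:(rewrite tz; lra)) /= H.
    have H1 : t * ys (T z) <= t * `|z| * ys e + eps * (t * `|z| * `|My|) := H.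
    have H2 : t * (ys (T z) - (`|z| * ys e + eps * (`|z| * `|My|))) <= 0.
      have -> : t * (ys (T z) - (`|z| * ys e + eps * (`|z| * `|My|))) =
        t * ys (T z) - (t * `|z| * ys e + eps * (t * `|z| * `|My|)) by ring.
      lra.
    by rewrite -subr_le0; move: H2; rewrite pmulr_rle0.
  have nb : forall x, `|ys (T x)| <= `|x| * ys e.
    move=> x; apply: (@le_eps _ _ _ (`|x| * `|My|)).
      by apply: mulr_ge0.
    move=> eps ep; rewrite ler_norml; apply/andP; split; last exact: key.
    have := key eps ep (- x).
    rewrite normrN -scaleN1r (@blZ _ _ _ _ _ _ TL) (@blZ _ _ _ _ _ _ ysL) /=.
    move=> H; have H1 : - ys (T x) <= `|x| * ys e + eps * (`|x| * `|My|) by move: H; rewrite scaleN1r.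
    lra.
  exists (fun x => ys (T x) / ys e).
    have nb' : forall x, `|ys (T x) / ys e| <= `|x|.
      move=> x; rewrite normrM (@gtr0_norm _ (ys e)^-1); last by rewrite invr_gt0.
      by rewrite ler_pdivrMr //; exact: nb.
    split => //; split.
      move=> a x y /=; rewrite TL.1 ysl /=.
      have sc : forall u v : R, (u *: (v : R^o)) = u * v by [].
      rewrite !sc; field; by rewrite gt_eqF.
    by exists 1 => x; rewrite mul1r; exact: nb'.
  move=> x; rewrite mulrC divfK //; by rewrite gt_eqF.
Qed.
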